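(* For every integer $q \ge 2$, the complete bipartite graph $K_{q-1,(q-1)^{q-1}}$ (viewed as an undirected graph) is $q$-solvable.
   Context: All graphs are finite. A directed graph $D=(V,E)$ has arcs $E \subseteq \{(u,v)\in V^2 : u \neq v\}$; bidirectional pairs are allowed. An undirected graph is identified with the directed graph having both arcs $(u,v)$ and $(v,u)$ for each edge $\{u,v\}$. The in-neighbourhood of $v$ is $N^-(v)=\{u : (u,v)\in E\}$. For an integer $q\ge 2$ let $[q]=\{0,1,\dots,q-1\}$, with arithmetic modulo $q$ where needed. A $D$-function over $[q]$ is a map $f=(f_v)_{v\in V}:[q]^V\to[q]^V$ such that each $f_v(x)$ depends only on $(x_u)_{u\in N^-(v)}$. The graph $D$ is $q$-solvable if there is a $D$-function $f$ over $[q]$ such that for every $x\in[q]^V$ there exists a vertex $v$ with $f_v(x)=x_v$. *)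

(* Defs.v *)
From mathcomp Require Import all_boot.
Set Implicit Arguments. Unset Strict Implicit. Unset Printing Implicit Defensive.

(* A directed graph on a finite vertex type V is given by its arc relation
   E : rel V, where E u v means (u,v) is an arc; loops are forbidden. *)
Definition digraph (V : finType) (E : rel V) : Prop := irreflexive E.

(* [q] = {0,...,q-1} is represented by 'I_q; a configuration x in [q]^V is
   a function V -> 'I_q.  A D-function is given coordinatewise: f v x is
   f_v(x), and it must depend only on the values of x on N^-(v). *)
Definition D_function (q : nat) (V : finType) (E : rel V)
  (f : V -> (V -> 'I_q) -> 'I_q) : Prop :=
  forall (v : V) (x y : V -> 'I_q),
    (forall u : V, E u v -> x u = y u) -> f v x = f v y.

Definition solvable (q : nat) (V : finType) (E : rel V) : Prop :=
  exists f : V -> (V -> 'I_q) -> 'I_q,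
    D_function E f /\ forall x : V -> 'I_q, exists v : V, f v x = x v.

(* Complete bipartite graph K_{a,b} on vertex set 'I_a + 'I_b, viewed as a
   directed graph with both arcs for each edge. *)

Definition Kbip_rel (a b : nat) : rel ('I_a + 'I_b)%type :=
  fun u v => match u, v with
             | inl _, inr _ => true
             | inr _, inl _ => true
             | _, _ => false
             end.
Arguments Kbip_rel : clear implicits.
Lemma Kbip_digraph a b : digraph (Kbip_rel a b).
Proof. by case. Qed.

(* Main.v *)
Require Import Defs.
From mathcomp Require Import all_boot.
From Stdlib Require Import Classical ClassicalEpsilon.
Set Implicit Arguments. Unset Strict Implicit. Unset Printing Implicit Defensive.

Fixpoint firstAgr (T : eqType) (m : nat) (phi : nat -> T) (y : nat -> option T)
  : option nat :=
  match m with
  | 0 => None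
  | m'.+1 => if y 0 == Some (phi 0) then Some 0
             else omap S (firstAgr m' (fun k => phi k.+1) (fun k => y k.+1))
  end.

Lemma firstAgr_none (T : eqType) m phi y :
  (forall a, a < m -> y a != Some (phi a)) -> @firstAgr T m phi y = None.
Proof.
elim: m phi y => [|m IH] phi y H //=.
rewrite (negbTE (H 0 _)) // IH // => a Ha. exact: H a.+1 Ha.
Qed.

Lemma firstAgr_ext (T : eqType) m phi phi' y y' :
  (forall a, a < m -> phi a = phi' a) -> (forall a, a < m -> y a = y' a) ->
  @firstAgr T m phi y = firstAgr m phi' y'.
Proof.
elim: m phi phi' y y' => [|m IH] phi phi' y y' H1 H2 //=.
rewrite H1 // H2 // (IH _ (fun k => phi' k.+1) _ (fun k => y' k.+1)) //.
  by move=> a Ha; exact: H1 a.+1 Ha.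
by move=> a Ha; exact: H2 a.+1 Ha.
Qed.

Definition pcons (T : Type) (v : T) (f : nat -> T) : nat -> T :=
  fun k => if k is k'.+1 then f k' else v.

Lemma keyL (T : eqType) (w : T) m (c : (nat -> T) -> nat) :
  (forall phi, c phi < m) ->
  exists h : nat -> option T, forall y : nat -> option T,
    (forall a, a < m -> y a <> h a) -> exists phi, firstAgr m phi y = Some (c phi).
Proof.
elim: m c => [|m IH] c Hc.
  by have := Hc (fun _ => w).
case: (classic (forall v : T, exists phi, phi 0 = v /\ c phi = 0)) => [P|nP].
  exists (fun _ => None) => y Hy.
  case Ey: (y 0) => [v|]; last by case: (Hy 0 erefl Ey).
  have [phi [E1 E2]] := P v.
  by exists phi => /=; rewrite Ey E1 eqxx E2.
have [v0 Hv0] : exists v0, forall phi, phi 0 = v0 -> c phi <> 0.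
  apply: NNPP => H; apply: nP => v; apply: NNPP => H'.
  apply: H; exists v => phi E C; apply: H'; by exists phi.
pose c' := fun phi' => (c (pcons v0 phi')).-1.
have Hc' : forall phi', c' phi' < m.
  move=> phi'; rewrite /c'; have := Hc (pcons v0 phi').
  have := Hv0 (pcons v0 phi') erefl; by case: (c _).
have [h' Hh'] := IH c' Hc'.
exists (pcons (Some v0) h') => y Hy.
have [phi' Hphi'] := Hh' (fun k => y k.+1) (fun a Ha => Hy a.+1 Ha).
exists (pcons v0 phi') => /=.
have -> : (y 0 == Some v0) = false by apply/eqP => E; exact: Hy 0 erefl E.
rewrite Hphi' /= /c'; have := Hv0 (pcons v0 phi') erefl; by case: (c _).
Qed.

Section Main.
Variable p : nat.
Local Notation n := p.+1.

Definition TT := {ffun 'I_n -> 'I_n}.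
Lemma cardT : #|{: TT}| = n ^ n.
Proof. by rewrite card_ffun !card_ord. Qed.

Definition ee (i : 'I_(n ^ n)) : TT := enum_val (cast_ord (esym cardT) i).
Definition ri (f : TT) : 'I_(n ^ n) := cast_ord cardT (enum_rank f).
Lemma eri f : ee (ri f) = f.
Proof. by rewrite /ee /ri cast_ordK enum_rankK. Qed.

Definition enc (o : option 'I_n) : 'I_n.+1 :=
  if o is Some a then widen_ord (leqnSn n) a else ord_max.
Definition dec (k : 'I_n.+1) : option 'I_n := insub (val k).
Lemma decK k : enc (dec k) = k.
Proof.
rewrite /dec; case: insubP => [u Hu Eu|Hk] /=; apply: val_inj => //=.
by have := ltn_ord k; rewrite ltnS leq_eqVlt (negbTE Hk) orbF => /eqP.
Qed.

Definition Vt := ('I_n + 'I_(n ^ n))%type.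
Definition yn (x : Vt -> 'I_n.+1) : nat -> option 'I_n :=
  fun a => dec (x (inl (inord a))).
Definition phin (i : 'I_(n ^ n)) : nat -> 'I_n := fun a => ee i (inord a).
Definition GG (i : 'I_(n ^ n)) (y : nat -> option 'I_n) : 'I_n.+1 :=
  if firstAgr n (phin i) y is Some k then enc (Some (inord k)) else ord_max.
Definition Good (C : {ffun 'I_(n ^ n) -> 'I_n.+1}) (h : nat -> option 'I_n) :=
  forall y, (forall a, a < n -> y a <> h a) -> exists i, GG i y = C i.

Lemma lt_max (k : 'I_n.+1) : k <> ord_max -> k < n.
Proof.
move=> Hk; have := ltn_ord k; rewrite ltnS leq_eqVlt => /orP[/eqP E|//].
by case: Hk; apply: val_inj; rewrite /= E.
Qed.

Lemma exH C : exists h, Good C h.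
Proof.
case: (classic (exists i, C i = ord_max)) => [[i Ei]|nE].
  exists (fun a => Some (phin i a)) => y Hy; exists i.
  rewrite /GG firstAgr_none ?Ei // => a Ha; apply/eqP; exact: Hy a Ha.
pose c := fun phi : nat -> 'I_n => val (C (ri [ffun a : 'I_n => phi (val a)])).
have Hc : forall phi, c phi < n.
  move=> phi; apply: lt_max => E; apply: nE; by eexists; exact: E.
have [h Hh] := keyL ord0 Hc.
exists h => y Hy; have [phi Hphi] := Hh y Hy.
exists (ri [ffun a : 'I_n => phi (val a)]).
rewrite /GG (@firstAgr_ext _ _ _ phi _ y) ?Hphi //.
  apply: val_inj => /=; exact: inordK (Hc phi).
by move=> a Ha; rewrite /phin eri ffunE; congr phi; exact: inordK Ha.
Qed.

Definition HH (C : {ffun 'I_(n ^ n) -> 'I_n.+1}) : nat -> option 'I_n :=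
  proj1_sig (constructive_indefinite_description _ (exH C)).
Lemma HHgood C : Good C (HH C).
Proof. exact: proj2_sig (constructive_indefinite_description _ (exH C)). Qed.

Definition strat (v : Vt) (x : Vt -> 'I_n.+1) : 'I_n.+1 :=
  match v with
  | inl a => enc (HH [ffun i => x (inr i)] (val a))
  | inr i => GG i (yn x)
  end.

Lemma main_sol : solvable n.+1 (Kbip_rel n (n ^ n)).
Proof.
exists strat; split.
  move=> [a|i] x y Hxy /=.
    congr (enc (HH _ _)); apply/ffunP => i; rewrite !ffunE; exact: Hxy.
  rewrite /GG (@firstAgr_ext _ _ (phin i) (phin i) (yn x) (yn y)) // => a _.
  by rewrite /yn Hxy.
move=> x.
have Hh := @HHgood [ffun i => x (inr i)].
case: (classic (exists a, a < n /\ yn x a = HH [ffun i => x (inr i)] a)).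
  move=> [a [Ha E]]; exists (inl (Ordinal Ha)) => /=.
  rewrite -E /yn.
  have -> : inord a = Ordinal Ha by apply: val_inj; rewrite /= inordK.
  exact: decK.
move=> nE.
have [i Ei] := Hh (yn x) (fun a Ha E => nE (ex_intro _ a (conj Ha E))).
by exists (inr i) => /=; rewrite Ei ffunE.
Qed.
End Main.

Theorem theorem1 (q : nat) (hq : 2 <= q) :
  solvable q (Kbip_rel (q - 1) ((q - 1) ^ (q - 1))).
Proof.
case: q hq => [|[|p]] // _.
exact: main_sol p.
Qed.
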